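(* Every hyperlogarithm of type $\mathcal M_{0,5}$, $L(\varphi;z_1)$ with $\varphi$ a word in $S^0(A^{(1)}_{1\otimes2})$, is a single-valued holomorphic function of $(z_1,z_2)$ on some neighbourhood of $\{(z_1,z_2)\in\mathbf P^1\times\mathbf P^1: |z_1|<1,|z_2|<1\}\cup\{(0,1)\}$. In particular, if $|z_1|$ is small enough, it can be continued analytically with respect to the parameter $z_2$ from $z_2=0$ to $z_2=1$.
   Context: Let $\zeta_1=dz_1/z_1$, $\zeta_{11}=dz_1/(1-z_1)$, $\zeta^{(1)}_{12}=z_2dz_1/(1-z_1z_2)$, regarded as 1-forms in $z_1$ with $z_2$ a parameter. $S^0(A^{(1)}_{1\otimes2})$ is the span of words $\varphi=\zeta_1^{k_1-1}\circ\omega_1\circ\cdots\circ\zeta_1^{k_r-1}\circ\omega_r$ with $\omega_m\in\{\zeta_{11},\zeta^{(1)}_{12}\}$, $k_m\ge1$ (words not ending in $\zeta_1$), and the empty word. For such $\varphi$, $L(\varphi;z_1)=\int_0^{z_1}\varphi$ is the iterated integral ($\int_0^z\omega_1\circ\cdots\circ\omega_r=\int_0^z\omega_1(t)\int_0^t\omega_2\circ\cdots\circ\omega_r$, $\int\mathbf 1=1$); for small $|z_1|$ it equals $\sum_{n_1>\cdots>n_r>0}\frac{\alpha_1^{n_1-n_2}\cdots\alpha_r^{n_r}}{n_1^{k_1}\cdots n_r^{k_r}}z_1^{n_1}$ with $\alpha_m=1$ if $\omega_m=\zeta_{11}$ and $\alpha_m=z_2$ if $\omega_m=\zeta^{(1)}_{12}$.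 *)

(* Defs.v *)
From Stdlib Require Import Reals List.
From Coquelicot Require Import Coquelicot.
Open Scope C_scope.

(* The two non-ζ1 letters: ω = ζ_{11} = dz1/(1-z1), ω = ζ^{(1)}_{12} = z2 dz1/(1-z1 z2). *)
Inductive letter := zeta11 | zeta12.

(* A word φ = ζ1^{k1-1}∘ω1∘ ... ∘ζ1^{kr-1}∘ωr of S^0(A^{(1)}_{1⊗2}) is encoded
   as the list [(k1-1, ω1); ...; (kr-1, ωr)]; the empty list is the empty word.
   (Every such list is a word not ending in ζ1, and conversely.) *)
Definition word := list (nat * letter).

Definition alpha (o : letter) (z2 : C) : C :=
  match o with zeta11 => 1 | zeta12 => z2 end.

(* coef w z2 n = coefficient of z1^n in
   Σ_{n1>...>nr>0} α1^{n1-n2}...αr^{nr} / (n1^{k1}...nr^{kr}) z1^{n1},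
   computed recursively (convention n_{r+1} = 0):
   coef [] n = [n = 0];
   coef ((j,ω)::w) n = [n>0] / n^{j+1} * Σ_{m<n} α^{n-m} coef w m. *)
Fixpoint coef (w : word) (z2 : C) (n : nat) : C :=
  match w with
  | nil => match n with O => 1 | S _ => 0 end
  | (j, o) :: w' =>
      match n with
      | O => 0
      | S _ => / (RtoC (INR n) ^ (S j)) *
               sum_n (fun m => if Nat.ltb m n
                               then alpha o z2 ^ (n - m) * coef w' z2 m
                               else RtoC 0) n
      end
  end.

Definition is_hyperlog (w : word) (z1 z2 : C) (l : C) : Prop :=
  is_series (fun n => coef w z2 n * z1 ^ n) l.

(* Holomorphy in two complex variables on an open set U ⊆ C × C
   (Osgood's definition: continuous and complex-differentiable in each variable). *)
Definition holomorphic2_on (U : C * C -> Prop) (F : C * C -> C) : Prop :=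
  open (T := prod_UniformSpace C_UniformSpace C_UniformSpace) U /\
  forall p : C * C, U p ->
    continuous (T := prod_UniformSpace C_UniformSpace C_UniformSpace)
               (U := C_UniformSpace) F p /\
    ex_derive (K := C_AbsRing) (V := C_NormedModule) (fun w => F (w, snd p)) (fst p) /\
    ex_derive (K := C_AbsRing) (V := C_NormedModule) (fun w => F (fst p, w)) (snd p).

(* Main.v *)
Require Import Defs.
From Stdlib Require Import Reals List Lra Psatz.
From Coquelicot Require Import Coquelicot.
Open Scope C_scope.

Definition good (r : R) (n : nat) (M : R) (f : C -> C) : Prop :=
  (0 <= M)%R /\ exists f' : C -> C, forall x y, (Cmod x <= r)%R -> (Cmod y <= r)%R ->
   (Cmod (f x) <= M * r^n)%R /\
   (r * Cmod (f' x) <= M * INR n * r^n)%R /\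
   (r * Cmod (f y - f x) <= M * INR n * r^n * Cmod (y - x))%R /\
   (r^2 * Cmod (f y - f x - f' x * (y - x)) <= M * (INR n)^2 * r^n * Cmod (y-x)^2)%R.

Lemma good_M (r : R) n M M' f : (M <= M')%R -> (0 <= r)%R -> good r n M f -> good r n M' f.
Proof.
  intros HM Hr [HM0 [f' Hf]]. split; [lra|]. exists f'. intros x y Hx Hy.
  destruct (Hf x y Hx Hy) as (H1 & H2 & H3 & H4).
  assert (0 <= r ^ n)%R by (apply pow_le; lra).
  assert (0 <= INR n)%R by apply pos_INR.
  assert (0 <= Cmod (y - x))%R by apply Cmod_ge_0.
  repeat split.
  - apply (Rle_trans _ _ _ H1). apply Rmult_le_compat_r; lra.
  - apply (Rle_trans _ _ _ H2). repeat apply Rmult_le_compat_r; lra.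
  - apply (Rle_trans _ _ _ H3). repeat apply Rmult_le_compat_r; lra.
  - apply (Rle_trans _ _ _ H4). repeat apply Rmult_le_compat_r; try lra.
    apply pow_le; lra. apply pow2_ge_0.
Qed.

Lemma good_scal r n M c f : good r n M f -> good r n (Cmod c * M) (fun z => c * f z).
Proof.
  intros [HM0 [f' Hf]]. split. { apply Rmult_le_pos; [apply Cmod_ge_0|lra]. }
  exists (fun z => c * f' z). intros x y Hx Hy.
  destruct (Hf x y Hx Hy) as (H1 & H2 & H3 & H4).
  assert (0 <= Cmod c)%R by apply Cmod_ge_0.
  repeat split.
  - rewrite Cmod_mult, Rmult_assoc. apply Rmult_le_compat_l; lra.
  - rewrite Cmod_mult. replace (r * (Cmod c * Cmod (f' x)))%R with (Cmod c * (r * Cmod (f' x)))%R by ring.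
    replace (Cmod c * M * INR n * r ^ n)%R with (Cmod c * (M * INR n * r ^ n))%R by ring.
    apply Rmult_le_compat_l; lra.
  - replace (c * f y - c * f x) with (c * (f y - f x)) by ring. rewrite Cmod_mult.
    replace (r * (Cmod c * Cmod (f y - f x)))%R with (Cmod c * (r * Cmod (f y - f x)))%R by ring.
    replace (Cmod c * M * INR n * r ^ n * Cmod (y - x))%R with (Cmod c * (M * INR n * r ^ n * Cmod (y - x)))%R by ring.
    apply Rmult_le_compat_l; lra.
  - replace (c * f y - c * f x - c * f' x * (y - x)) with (c * (f y - f x - f' x * (y - x))) by ring.
    rewrite Cmod_mult.
    replace (r^2 * (Cmod c * Cmod (f y - f x - f' x * (y - x))))%R with (Cmod c * (r^2 * Cmod (f y - f x - f' x * (y - x))))%R by ring.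
    replace (Cmod c * M * INR n ^ 2 * r ^ n * Cmod (y - x) ^ 2)%R with (Cmod c * (M * INR n ^ 2 * r ^ n * Cmod (y - x) ^ 2))%R by ring.
    apply Rmult_le_compat_l; lra.
Qed.

Lemma good_plus r n M1 M2 f g : good r n M1 f -> good r n M2 g -> good r n (M1 + M2) (fun z => f z + g z).
Proof.
  intros [HM1 [f' Hf]] [HM2 [g' Hg]]. split; [lra|].
  exists (fun z => f' z + g' z). intros x y Hx Hy.
  destruct (Hf x y Hx Hy) as (H1 & H2 & H3 & H4).
  destruct (Hg x y Hx Hy) as (G1 & G2 & G3 & G4).
  assert (Hr : (0 <= r)%R) by (apply Rle_trans with (Cmod x); [apply Cmod_ge_0|lra]).
  repeat split.
  - eapply Rle_trans; [apply Cmod_triangle|]. lra.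
  - eapply Rle_trans; [apply Rmult_le_compat_l; [lra|apply Cmod_triangle]|]. lra.
  - replace (f y + g y - (f x + g x)) with ((f y - f x) + (g y - g x)) by ring.
    eapply Rle_trans; [apply Rmult_le_compat_l; [lra|apply Cmod_triangle]|]. lra.
  - replace (f y + g y - (f x + g x) - (f' x + g' x) * (y - x)) with
      ((f y - f x - f' x * (y - x)) + (g y - g x - g' x * (y - x))) by ring.
    eapply Rle_trans; [apply Rmult_le_compat_l; [nra|apply Cmod_triangle]|]. lra.
Qed.

Lemma good_zero r n : good r n 0 (fun _ => 0).
Proof.
  split; [lra|]. exists (fun _ => 0). intros x y _ _.
  replace (0 - 0 : C) with (0 : C) by ring. replace (0 - 0 * (y - x) : C) with (0 : C) by ring.
  rewrite Cmod_0. repeat split; nra.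
Qed.

Lemma good_mult r a b M1 M2 f g : good r a M1 f -> good r b M2 g ->
  good r (a + b) (M1 * M2) (fun z => f z * g z).
Proof.
  intros [HM1 [f' Hf]] [HM2 [g' Hg]]. split; [nra|].
  exists (fun z => f' z * g z + f z * g' z). intros x y Hx Hy.
  destruct (Hf x y Hx Hy) as (H1 & H2 & H3 & H4).
  destruct (Hg x y Hx Hy) as (G1 & G2 & G3 & G4).
  destruct (Hf y x Hy Hx) as (H1' & _).
  destruct (Hg x x Hx Hx) as (G1' & _).
  assert (Hr : (0 <= r)%R) by (apply Rle_trans with (Cmod x); [apply Cmod_ge_0|lra]).
  rewrite pow_add, plus_INR.
  set (P := (r ^ a)%R) in *. set (Q := (r ^ b)%R) in *.
  set (A := INR a) in *. set (B := INR b) in *.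
  assert (0 <= P)%R by (apply pow_le; lra).
  assert (0 <= Q)%R by (apply pow_le; lra).
  assert (0 <= A)%R by apply pos_INR.
  assert (0 <= B)%R by apply pos_INR.
  set (h := Cmod (y - x)) in *.
  assert (0 <= h)%R by apply Cmod_ge_0.
  pose proof (Cmod_ge_0 (f x)). pose proof (Cmod_ge_0 (g x)).
  pose proof (Cmod_ge_0 (f y)). pose proof (Cmod_ge_0 (g y)).
  pose proof (Cmod_ge_0 (f' x)). pose proof (Cmod_ge_0 (g' x)).
  pose proof (Cmod_ge_0 (f y - f x)). pose proof (Cmod_ge_0 (g y - g x)).
  pose proof (Cmod_ge_0 (f y - f x - f' x * (y - x))).
  pose proof (Cmod_ge_0 (g y - g x - g' x * (y - x))).
  repeat split.
  - rewrite Cmod_mult.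
    replace (M1 * M2 * (P * Q))%R with ((M1 * P) * (M2 * Q))%R by ring.
    apply Rmult_le_compat; lra.
  - eapply Rle_trans; [apply Rmult_le_compat_l; [lra|apply Cmod_triangle]|].
    rewrite !Cmod_mult.
    assert (T1 : (r * Cmod (f' x) * Cmod (g x) <= (M1 * A * P) * (M2 * Q))%R)
      by (apply Rmult_le_compat; nra).
    assert (T2 : (Cmod (f x) * (r * Cmod (g' x)) <= (M1 * P) * (M2 * B * Q))%R)
      by (apply Rmult_le_compat; nra).
    nra.
  - replace (f y * g y - f x * g x) with (f y * (g y - g x) + g x * (f y - f x)) by ring.
    eapply Rle_trans; [apply Rmult_le_compat_l; [lra|apply Cmod_triangle]|].
    rewrite !Cmod_mult.
    assert (T1 : (Cmod (f y) * (r * Cmod (g y - g x)) <= (M1 * P) * (M2 * B * Q * h))%R)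
      by (apply Rmult_le_compat; nra).
    assert (T2 : (Cmod (g x) * (r * Cmod (f y - f x)) <= (M2 * Q) * (M1 * A * P * h))%R)
      by (apply Rmult_le_compat; nra).
    nra.
  - replace (f y * g y - f x * g x - (f' x * g x + f x * g' x) * (y - x)) with
      (f y * (g y - g x - g' x * (y - x)) + (f y - f x) * g' x * (y - x) + g x * (f y - f x - f' x * (y - x))) by ring.
    eapply Rle_trans; [apply Rmult_le_compat_l; [nra|apply Cmod_triangle]|].
    eapply Rle_trans; [apply Rmult_le_compat_l; [nra|apply Rplus_le_compat_r; apply Cmod_triangle]|].
    rewrite !Cmod_mult. fold h.
    assert (T1 : (Cmod (f y) * (r^2 * Cmod (g y - g x - g' x * (y - x))) <= (M1 * P) * (M2 * B^2 * Q * h^2))%R)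
      by (apply Rmult_le_compat; nra).
    assert (T2 : ((r * Cmod (f y - f x)) * (r * Cmod (g' x)) <= (M1 * A * P * h) * (M2 * B * Q))%R)
      by (apply Rmult_le_compat; nra).
    assert (T3 : (Cmod (g x) * (r^2 * Cmod (f y - f x - f' x * (y - x))) <= (M2 * Q) * (M1 * A^2 * P * h^2))%R)
      by (apply Rmult_le_compat; nra).
    assert (K : (0 <= M1 * M2 * P * Q * h^2 * A * B)%R).
    { repeat apply Rmult_le_pos; nra. }
    nra.
Qed.
Ltac sp4 := split; [|split; [|split]].

Lemma good_ext r n M f g : (forall z, f z = g z) -> good r n M f -> good r n M g.
Proof.
  intros E [HM [f' Hf]]. split; [lra|]. exists f'. intros x y Hx Hy. rewrite <- !E. auto.
Qed.

Lemma good_const r k c : (Cmod c <= r ^ k)%R -> good r k 1 (fun _ => c).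
Proof.
  intros Hc. split; [lra|]. exists (fun _ => 0). intros x y Hx Hy.
  assert (Hr : (0 <= r)%R) by (apply Rle_trans with (Cmod x); [apply Cmod_ge_0|lra]).
  assert (0 <= r ^ k)%R by (apply pow_le; lra).
  pose proof (pos_INR k). pose proof (Cmod_ge_0 (y - x)).
  replace (c - c : C) with (0 : C) by ring. replace (0 - 0 * (y - x) : C) with (0 : C) by ring.
  rewrite Cmod_0. sp4; try nra; rewrite Rmult_0_r;
  repeat apply Rmult_le_pos; try lra; try apply pow2_ge_0.
Qed.

Lemma good_id r : (0 <= r)%R -> good r 1 1 (fun z => z).
Proof.
  intros Hr. split; [lra|]. exists (fun _ => 1). intros x y Hx Hy.
  replace (y - x - 1 * (y - x) : C) with (0 : C) by ring.
  rewrite Cmod_0, Cmod_1. simpl. sp4; nra.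
Qed.

Lemma good_pow r n : (0 <= r)%R -> good r n 1 (fun z => z ^ n).
Proof.
  intros Hr. induction n.
  - apply (good_ext _ _ _ (fun _ => 1)); [reflexivity|]. apply good_const. rewrite Cmod_1. simpl. lra.
  - apply (good_M _ _ (1 * 1)); [lra|lra|]. apply (good_mult r 1 n 1 1 (fun z => z) (fun z => z ^ n)); auto.
    apply good_id; auto.
Qed.

Lemma good_sum r n (M : nat -> R) (g : nat -> C -> C) N :
  (forall m, good r n (M m) (g m)) -> good r n (sum_n M N) (fun z => sum_n (fun m => g m z) N).
Proof.
  intros H. induction N.
  - rewrite sum_O. apply (good_ext _ _ _ (g 0%nat)); [intros; now rewrite sum_O|auto].
  - rewrite sum_Sn. apply (good_ext _ _ _ (fun z => sum_n (fun m => g m z) N + g (S N) z)).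
    + intros; now rewrite sum_Sn.
    + apply good_plus; auto.
Qed.

Lemma sum_ind_lt (n N : nat) : (N < n)%nat ->
  sum_n (fun m => if Nat.ltb m n then 1%R else 0%R) N = INR (S N).
Proof.
  induction N; intros H.
  - rewrite sum_O. destruct (Nat.ltb_spec 0 n); [simpl; lra|lia].
  - rewrite sum_Sn, IHN by lia. destruct (Nat.ltb_spec (S N) n); [|lia].
    change (plus (INR (S N)) 1%R = INR (S (S N))). rewrite (S_INR (S N)). reflexivity.
Qed.

Lemma alpha_good r o k : (1 <= r)%R -> good r k 1 (fun z => alpha o z ^ k).
Proof.
  intros Hr. destruct o; simpl.
  - apply (good_ext _ _ _ (fun _ => 1)); [intros; now rewrite Cpow_1_l|].
    apply good_const. rewrite Cmod_1. apply pow_R1_Rle; lra.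
  - apply good_pow; lra.
Qed.

Lemma good_coef w : forall n r, (1 <= r)%R -> good r n 1 (fun z => coef w z n).
Proof.
  induction w as [|[j o] w IH]; intros n r Hr.
  - destruct n; simpl.
    + apply good_const. rewrite Cmod_1. simpl; lra.
    + apply (good_M _ _ 0); [lra|lra|]. apply good_zero.
  - destruct n as [|k].
    + simpl. apply (good_M _ _ 0); [lra|lra|]. apply good_zero.
    + set (n := S k).
      change (good r n 1 (fun z => / (RtoC (INR n) ^ (S j)) *
               sum_n (fun m => if Nat.ltb m n
                               then alpha o z ^ (n - m) * coef w z m
                               else RtoC 0) n)).
      assert (Hs : good r n (sum_n (fun m => if Nat.ltb m n then 1%R else 0%R) n)
         (fun z => sum_n (fun m => if Nat.ltb m n
                               then alpha o z ^ (n - m) * coef w z m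
                               else RtoC 0) n)).
      { apply (good_sum r n (fun m => if Nat.ltb m n then 1%R else 0%R)
          (fun m z => if Nat.ltb m n then alpha o z ^ (n - m) * coef w z m else RtoC 0)).
        intros m. destruct (Nat.ltb_spec m n).
        - replace n with ((n - m) + m)%nat at 1 by lia.
          apply (good_M _ _ (1 * 1)); [lra|lra|].
          apply (good_mult r (n - m) m 1 1 (fun z => alpha o z ^ (n - m)) (fun z => coef w z m)).
          + apply alpha_good; lra.
          + apply IH; lra.
        - apply good_zero. }
      assert (Esum : sum_n (fun m => if Nat.ltb m n then 1%R else 0%R) n = INR n).
      { unfold n. rewrite sum_Sn, sum_ind_lt by lia.
        destruct (Nat.ltb_spec (S k) (S k)); [lia|].
        change (plus (INR (S k)) 0%R) with (INR (S k) + 0)%R. apply Rplus_0_r. }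
      rewrite Esum in Hs.
      apply good_scal with (c := / (RtoC (INR n) ^ (S j))) in Hs.
      eapply good_M; [|lra|exact Hs].
      rewrite <- RtoC_pow, <- RtoC_inv, Cmod_R.
      2: { apply pow_nonzero. apply not_0_INR. unfold n; lia. }
      assert (Hn : (1 <= INR n)%R) by (apply (le_INR 1); unfold n; lia).
      rewrite Rabs_right.
      2: { apply Rle_ge, Rlt_le, Rinv_0_lt_compat, pow_lt; lra. }
      rewrite <- tech_pow_Rmult, Rinv_mult.
      assert (0 < / INR n ^ j <= 1)%R.
      { split. apply Rinv_0_lt_compat, pow_lt; lra.
        rewrite <- Rinv_1. apply Rinv_le_contravar; [lra|]. apply pow_R1_Rle; lra. }
      replace (/ INR n * / INR n ^ j * INR n)%R with (/ INR n ^ j)%R by (field; split; try apply pow_nonzero; lra).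
      lra.
Qed.
From Stdlib Require Import IndefiniteDescription.

Lemma series_bound (a : nat -> C) (b : nat -> R) (l : C) :
  is_series a l -> ex_series b -> (forall n, (Cmod (a n) <= b n)%R) -> (Cmod l <= Series b)%R.
Proof.
  intros Ha Hb Hab.
  assert (Hl : is_series b (Series b)) by (apply Series_correct; auto).
  assert (H1 : filterlim (fun N => Cmod (sum_n a N)) eventually (locally (Cmod l))).
  { eapply filterlim_comp; [exact Ha|]. apply (filterlim_norm (K := C_AbsRing) (V := C_NormedModule)). }
  pose proof (filterlim_le (F := eventually) (fun N => Cmod (sum_n a N)) (sum_n b) (Cmod l) (Series b)) as Hle.
  simpl in Hle. apply Hle; auto.
  exists 0%nat. intros N _.
  eapply Rle_trans. apply (norm_sum_n_m (K := C_AbsRing) (V := C_NormedModule)).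
  apply sum_n_m_le. intros k. apply Hab.
Qed.

Lemma series_diff_bound (a b : nat -> C) (la lb : C) (K : nat -> R) (c : R) :
  is_series a la -> is_series b lb -> ex_series K ->
  (forall n, (Cmod (a n - b n) <= K n * c)%R) -> (Cmod (la - lb) <= Series K * c)%R.
Proof.
  intros Ha Hb HK H.
  rewrite <- Series_scal_r.
  apply (series_bound (fun n => a n - b n)).
  - apply (is_series_minus a b la lb Ha Hb).
  - apply ex_series_scal_r; auto.
  - auto.
Qed.

Definition G (q : R) (n : nat) : R := (INR (S n) * INR (S (S n)) * q ^ n)%R.

Lemma ex_series_G q : (0 <= q < 1)%R -> ex_series (G q).
Proof.
  intros Hq.
  assert (Hr : CV_radius (fun _ => 1%R) = 1%R).
  { rewrite (CV_radius_finite_DAlembert _ 1); [f_equal; lra| |lra|].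
    - intros; lra.
    - eapply is_lim_seq_ext; [|apply is_lim_seq_const]. intros n. simpl.
      rewrite Rdiv_1_r, Rabs_R1. reflexivity. }
  assert (Hr2 : CV_radius (PS_derive (PS_derive (fun _ => 1%R))) = 1%R).
  { rewrite !CV_radius_derive. exact Hr. }
  assert (Hin : Rbar_lt (Rabs q) (CV_radius (PS_derive (PS_derive (fun _ => 1%R))))).
  { rewrite Hr2. simpl. rewrite Rabs_right; lra. }
  apply CV_disk_inside in Hin.
  eapply ex_series_ext; [|exact Hin].
  intros n. unfold PS_derive, G. rewrite Rabs_right; [rewrite Rmult_1_r; reflexivity|].
  apply Rle_ge. repeat apply Rmult_le_pos; try apply pos_INR; try lra. apply pow_le; lra.
Qed.

Lemma G_bounds q n : (0 <= q)%R ->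
  (q ^ n <= G q n)%R /\ (INR n * q ^ n <= G q n)%R /\ (INR n ^ 2 * q ^ n <= G q n)%R.
Proof.
  intros Hq. unfold G. assert (0 <= q ^ n)%R by (apply pow_le; lra).
  rewrite !S_INR. pose proof (pos_INR n). split; [|split]; nra.
Qed.

Lemma deriv_series (T : nat -> C -> C) (f : C -> C) (x : C) (r : R) (K : nat -> R) :
  (0 < r)%R -> (Cmod x < r)%R -> ex_series K ->
  (forall y, (Cmod y <= r)%R -> is_series (fun n => T n y) (f y)) ->
  (forall n, exists d, (r * Cmod d <= K n)%R /\ forall y, (Cmod y <= r)%R ->
      (r^2 * Cmod (T n y - T n x - d * (y - x)) <= K n * Cmod (y - x)^2)%R) ->
  ex_derive f x.
Proof.
  intros Hr Hx HK Hf Hd.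
  set (dfun := fun n => proj1_sig (constructive_indefinite_description _ (Hd n))).
  assert (Hdf : forall n, (r * Cmod (dfun n) <= K n)%R /\ forall y, (Cmod y <= r)%R ->
      (r^2 * Cmod (T n y - T n x - dfun n * (y - x)) <= K n * Cmod (y - x)^2)%R).
  { intros n. unfold dfun. destruct (constructive_indefinite_description _ (Hd n)) as [d Hd']. exact Hd'. }
  assert (Hex : ex_series dfun).
  { apply (ex_series_le (K := C_AbsRing) (V := C_CompleteNormedModule) dfun (fun n => K n * / r)%R).
    - intros n. change (Cmod (dfun n) <= K n * / r)%R. destruct (Hdf n) as [H1 _].
      apply (Rmult_le_reg_l r); [lra|]. field_simplify; lra.
    - apply ex_series_scal_r; auto. }
  destruct Hex as [D HD].
  exists D. split; [apply is_linear_scal_l|].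
  intros x' Hx'. apply (is_filter_lim_locally_unique (K := C_AbsRing) (V := AbsRing_NormedModule C_AbsRing)) in Hx'. subst x'.
  intros eps.
  set (S := Series (fun n => K n * / r^2)%R).
  assert (Hdel : (0 < Rmin (r - Cmod x) (eps / (Rabs S + 1)))%R).
  { apply Rmin_pos; [lra|]. apply Rdiv_lt_0_compat; [apply cond_pos|]. pose proof (Rabs_pos S); lra. }
  exists (mkposreal _ Hdel). intros y Hy.
  change (Cmod (f y - f x - (y - x) * D) <= eps * Cmod (y - x))%R.
  change (Cmod (y - x) < Rmin (r - Cmod x) (eps / (Rabs S + 1)))%R in Hy.
  set (h := Cmod (y - x)) in *.
  assert (Hh1 : (h < r - Cmod x)%R) by (eapply Rlt_le_trans; [exact Hy|apply Rmin_l]).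
  assert (Hh2 : (h < eps / (Rabs S + 1))%R) by (eapply Rlt_le_trans; [exact Hy|apply Rmin_r]).
  assert (Hy' : (Cmod y <= r)%R).
  { replace y with (x + (y - x)) by ring. eapply Rle_trans; [apply Cmod_triangle|]. fold h. lra. }
  assert (Hb : (Cmod (f y - f x - (y - x) * D) <= S * h ^ 2)%R).
  { unfold S. apply (series_diff_bound (fun n => T n y - T n x) (fun n => dfun n * (y - x))).
    - apply (is_series_minus (fun n => T n y) (fun n => T n x)); apply Hf; auto; lra.
    - eapply is_series_ext; [|apply (is_series_scal (y - x) dfun D HD)].
      intros n. change ((y - x) * dfun n = dfun n * (y - x)). apply Cmult_comm.
    - apply ex_series_scal_r; auto.
    - intros n. destruct (Hdf n) as [_ H2]. specialize (H2 y Hy').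
      apply (Rmult_le_reg_l (r ^ 2)); [apply pow_lt; lra|].
      fold h in H2. field_simplify; try lra. }
  pose proof (Rabs_pos S). pose proof (Rle_abs S).
  assert (0 <= h)%R by apply Cmod_ge_0.
  assert (E1 : (h * (Rabs S + 1) < eps)%R).
  { apply (Rmult_lt_compat_r (Rabs S + 1)) in Hh2; [|lra].
    unfold Rdiv in Hh2. rewrite Rmult_assoc, Rinv_l, Rmult_1_r in Hh2; lra. }
  eapply Rle_trans; [exact Hb|]. nra.
Qed.

Lemma loc2 (p : C * C) (d : R) (P : C * C -> Prop) : (0 < d)%R ->
  (forall q : C * C, (Cmod (fst q - fst p) < d)%R -> (Cmod (snd q - snd p) < d)%R -> P q) ->
  locally (T := prod_UniformSpace C_UniformSpace C_UniformSpace) p P.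
Proof.
  intros Hd H.
  pose proof (norm_factor_gt_0 (K := C_AbsRing) (V := C_NormedModule)) as Hnf.
  assert (Hd' : (0 < d / norm_factor (K := C_AbsRing) (V := C_NormedModule))%R) by (apply Rdiv_lt_0_compat; lra).
  exists (mkposreal _ Hd'). intros q [H1 H2].
  apply (norm_compat2 (K := C_AbsRing) (V := C_NormedModule)) in H1.
  apply (norm_compat2 (K := C_AbsRing) (V := C_NormedModule)) in H2.
  simpl in H1, H2.
  replace (norm_factor * (d / norm_factor))%R with d in H1, H2 by (field; lra).
  apply H; auto.
Qed.

Lemma cont2 (F : C * C -> C) (p : C * C) (d L : R) : (0 < d)%R -> (0 <= L)%R ->
  (forall q : C * C, (Cmod (fst q - fst p) < d)%R -> (Cmod (snd q - snd p) < d)%R ->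
     (Cmod (F q - F p) <= L * (Cmod (fst q - fst p) + Cmod (snd q - snd p)))%R) ->
  continuous (T := prod_UniformSpace C_UniformSpace C_UniformSpace) (U := C_UniformSpace) F p.
Proof.
  intros Hd HL H P [eps HP].
  assert (He : (0 < Rmin d (eps / (2 * L + 2)))%R).
  { apply Rmin_pos; [lra|]. apply Rdiv_lt_0_compat; [apply cond_pos|lra]. }
  apply (loc2 p _ _ He). intros q H1 H2. apply HP.
  apply (norm_compat1 (K := C_AbsRing) (V := C_NormedModule)).
  change (Cmod (F q - F p) < eps)%R.
  assert (A1 : (Cmod (fst q - fst p) < eps / (2 * L + 2))%R) by (eapply Rlt_le_trans; [exact H1|apply Rmin_r]).
  assert (A2 : (Cmod (snd q - snd p) < eps / (2 * L + 2))%R) by (eapply Rlt_le_trans; [exact H2|apply Rmin_r]).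
  assert (A3 : (Cmod (fst q - fst p) < d)%R) by (eapply Rlt_le_trans; [exact H1|apply Rmin_l]).
  assert (A4 : (Cmod (snd q - snd p) < d)%R) by (eapply Rlt_le_trans; [exact H2|apply Rmin_l]).
  specialize (H q A3 A4).
  set (u := Cmod (fst q - fst p)) in *. set (v := Cmod (snd q - snd p)) in *.
  assert (0 <= u)%R by apply Cmod_ge_0. assert (0 <= v)%R by apply Cmod_ge_0.
  pose proof (cond_pos eps).
  assert (B : ((u + v) * (2 * L + 2) < 2 * eps)%R).
  { assert (u * (2 * L + 2) < eps)%R.
    { apply (Rmult_lt_compat_r (2 * L + 2)) in A1; [|lra]. unfold Rdiv in A1.
      rewrite Rmult_assoc, Rinv_l, Rmult_1_r in A1; lra. }
    assert (v * (2 * L + 2) < eps)%R.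
    { apply (Rmult_lt_compat_r (2 * L + 2)) in A2; [|lra]. unfold Rdiv in A2.
      rewrite Rmult_assoc, Rinv_l, Rmult_1_r in A2; lra. }
    lra. }
  eapply Rle_lt_trans; [exact H|]. nra.
Qed.

Definition Tm (phi : word) (n : nat) (z1 z2 : C) : C := coef phi z2 n * z1 ^ n.
Definition Fh (phi : word) (p : C * C) : C :=
  iota (fun l : C_CompleteNormedModule => is_series (fun n => Tm phi n (fst p) (snd p)) l).

Lemma Fh_correct phi z1 z2 l : is_series (fun n => Tm phi n z1 z2) l -> Fh phi (z1, z2) = l.
Proof.
  intros H. unfold Fh. simpl.
  exact (iota_filterlim_locally (K := C_AbsRing) (V := C_CompleteNormedModule) (F := eventually)
    (sum_n (fun n => Tm phi n z1 z2)) l H).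
Qed.

Lemma good_use r n M f q : good r n M f -> (0 <= r)%R -> (M * r^n <= q^n)%R -> (0 <= q)%R ->
  exists f', forall x y, (Cmod x <= r)%R -> (Cmod y <= r)%R ->
   (r * Cmod (f' x) <= G q n)%R /\ (r * Cmod (f y - f x) <= G q n * Cmod (y - x))%R /\
   (r^2 * Cmod (f y - f x - f' x * (y - x)) <= G q n * Cmod (y - x)^2)%R.
Proof.
  intros [HM [f' Hf]] Hr HMq Hq. exists f'. intros x y Hx Hy.
  destruct (Hf x y Hx Hy) as (_ & H2 & H3 & H4).
  destruct (G_bounds q n Hq) as (_ & G2 & G3).
  pose proof (pos_INR n). pose proof (Cmod_ge_0 (y - x)).
  assert (0 <= M * r ^ n)%R by (apply Rmult_le_pos; [lra|apply pow_le; lra]).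
  assert (K1 : (INR n * (M * r ^ n) <= INR n * q ^ n)%R) by (apply Rmult_le_compat_l; lra).
  split; [|split].
  - eapply Rle_trans; [exact H2|].
    replace (M * INR n * r ^ n)%R with (INR n * (M * r ^ n))%R by ring. lra.
  - eapply Rle_trans; [exact H3|].
    replace (M * INR n * r ^ n * Cmod (y - x))%R with ((INR n * (M * r ^ n)) * Cmod (y - x))%R by ring.
    apply Rmult_le_compat_r; lra.
  - eapply Rle_trans; [exact H4|].
    assert (0 <= Cmod (y - x) ^ 2)%R by apply pow2_ge_0.
    assert (0 <= INR n ^ 2)%R by apply pow2_ge_0.
    replace (M * INR n ^ 2 * r ^ n * Cmod (y - x) ^ 2)%R with ((INR n ^ 2 * (M * r ^ n)) * Cmod (y - x) ^ 2)%R by ring.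
    apply Rmult_le_compat_r; [lra|].
    assert (INR n ^ 2 * (M * r ^ n) <= INR n ^ 2 * q ^ n)%R by (apply Rmult_le_compat_l; lra). lra.
Qed.

Lemma coef_bound phi y2 n r2 : (1 <= r2)%R -> (Cmod y2 <= r2)%R -> (Cmod (coef phi y2 n) <= r2 ^ n)%R.
Proof.
  intros H1 H2. destruct (good_coef phi n r2 H1) as [_ [f' Hf]].
  destruct (Hf y2 y2 H2 H2) as [H _]. lra.
Qed.

Lemma good_z1 phi y2 n r1 r2 : (0 <= r1)%R -> (1 <= r2)%R -> (Cmod y2 <= r2)%R ->
  good r1 n (r2 ^ n) (fun z => Tm phi n z y2).
Proof.
  intros H1 H2 H3. eapply good_M; [|exact H1|].
  2: { apply (good_scal r1 n 1 (coef phi y2 n) (fun z => z ^ n)). apply good_pow; auto. }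
  rewrite Rmult_1_r. apply coef_bound; auto.
Qed.

Lemma good_z2 phi y1 n r1 r2 : (Cmod y1 <= r1)%R -> (1 <= r2)%R ->
  good r2 n (r1 ^ n) (fun z => Tm phi n y1 z).
Proof.
  intros H1 H2. eapply good_M; [|lra|].
  2: { apply (good_ext _ _ _ (fun z => y1 ^ n * coef phi z n)).
       - intros z. unfold Tm. apply Cmult_comm.
       - apply good_scal. apply good_coef; auto. }
  rewrite Rmult_1_r, Cmod_pow. apply pow_incr. split; [apply Cmod_ge_0|auto].
Qed.

Lemma term_bound phi n y1 y2 r1 r2 : (Cmod y1 <= r1)%R -> (1 <= r2)%R -> (Cmod y2 <= r2)%R ->
  (Cmod (Tm phi n y1 y2) <= (r1 * r2) ^ n)%R.
Proof.
  intros H1 H2 H3. unfold Tm. rewrite Cmod_mult, Cmod_pow, Rpow_mult_distr, Rmult_comm.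
  apply Rmult_le_compat.
  - apply pow_le, Cmod_ge_0.
  - apply Cmod_ge_0.
  - apply pow_incr. split; [apply Cmod_ge_0|auto].
  - apply coef_bound; auto.
Qed.

Lemma conv phi y1 y2 r1 r2 : (Cmod y1 <= r1)%R -> (1 <= r2)%R -> (Cmod y2 <= r2)%R -> (r1 * r2 < 1)%R ->
  is_series (fun n => Tm phi n y1 y2) (Fh phi (y1, y2)).
Proof.
  intros H1 H2 H3 H4.
  assert (0 <= r1)%R by (eapply Rle_trans; [apply Cmod_ge_0|exact H1]).
  assert (Hq : (0 <= r1 * r2 < 1)%R) by (split; nra).
  destruct (ex_series_le (K := C_AbsRing) (V := C_CompleteNormedModule) (fun n => Tm phi n y1 y2) (G (r1 * r2))) as [l Hl].
  - intros n. change (Cmod (Tm phi n y1 y2) <= G (r1 * r2) n)%R.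
    eapply Rle_trans; [apply term_bound; eauto|]. apply G_bounds; lra.
  - apply ex_series_G; auto.
  - rewrite (Fh_correct phi y1 y2 l Hl). exact Hl.
Qed.

Lemma radii x1 x2 : (Cmod x1 * Rmax 1 (Cmod x2) < 1)%R ->
  exists r1 r2, (0 < r1)%R /\ (1 <= r2)%R /\ (Cmod x1 < r1)%R /\ (Cmod x2 < r2)%R /\ (r1 * r2 < 1)%R.
Proof.
  intros H. set (a := Cmod x1) in *. set (b := Rmax 1 (Cmod x2)) in *.
  assert (Ha : (0 <= a)%R) by apply Cmod_ge_0.
  assert (Hb : (1 <= b)%R) by apply Rmax_l.
  assert (Hb2 : (Cmod x2 <= b)%R) by apply Rmax_r.
  set (e := ((1 - a * b) / (a + b + 2))%R).
  assert (He : (0 < e)%R) by (apply Rdiv_lt_0_compat; lra).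
  assert (He2 : (e * (a + b + 2) = 1 - a * b)%R) by (unfold e; field; lra).
  assert (He3 : (e < 1)%R) by nra.
  exists (a + e)%R, (b + e)%R. split; [lra|split; [lra|split; [lra|split; [lra|]]]]. nra.
Qed.

Lemma near_le (x y : C) (r d : R) : (Cmod x + d <= r)%R -> (Cmod (y - x) < d)%R -> (Cmod y <= r)%R.
Proof.
  intros H1 H2. replace y with (x + (y - x)) by ring.
  eapply Rle_trans; [apply Cmod_triangle|]. lra.
Qed.

Definition Ureg (p : C * C) : Prop := (Cmod (fst p) * Rmax 1 (Cmod (snd p)) < 1)%R.

Lemma Ureg_in y1 y2 r1 r2 : (Cmod y1 <= r1)%R -> (Cmod y2 <= r2)%R -> (1 <= r2)%R -> (r1 * r2 < 1)%R ->
  Ureg (y1, y2).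
Proof.
  intros H1 H2 H3 H4. unfold Ureg; simpl.
  assert (Rmax 1 (Cmod y2) <= r2)%R by (apply Rmax_lub; lra).
  pose proof (Cmod_ge_0 y1).
  assert (1 <= Rmax 1 (Cmod y2))%R by apply Rmax_l.
  nra.
Qed.

Lemma holo phi : holomorphic2_on Ureg (Fh phi).
Proof.
  split.
  - intros [p1 p2] Hp. destruct (radii p1 p2 Hp) as (r1 & r2 & Hr1 & Hr2 & H1 & H2 & H12).
    apply (loc2 _ (Rmin (r1 - Cmod p1) (r2 - Cmod p2))).
    { apply Rmin_pos; lra. }
    intros [q1 q2] Hq1 Hq2. simpl in *.
    apply (Ureg_in q1 q2 r1 r2); auto.
    + eapply near_le; [|exact Hq1]. pose proof (Rmin_l (r1 - Cmod p1) (r2 - Cmod p2)). lra.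
    + eapply near_le; [|exact Hq2]. pose proof (Rmin_r (r1 - Cmod p1) (r2 - Cmod p2)). lra.
  - intros [p1 p2] Hp. destruct (radii p1 p2 Hp) as (r1 & r2 & Hr1 & Hr2 & H1 & H2 & H12).
    set (q0 := (r1 * r2)%R).
    assert (Hq0 : (0 <= q0 < 1)%R) by (unfold q0; split; nra).
    assert (HG : ex_series (G q0)) by (apply ex_series_G; auto).
    assert (Epow : forall n, (r2 ^ n * r1 ^ n = q0 ^ n)%R).
    { intros n. unfold q0. rewrite Rpow_mult_distr. ring. }
    assert (Epow' : forall n, (r1 ^ n * r2 ^ n = q0 ^ n)%R).
    { intros n. unfold q0. rewrite Rpow_mult_distr. ring. }
    simpl. split; [|split].
    +
      set (S1 := Series (fun n => G q0 n * / r1)%R).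
      set (S2 := Series (fun n => G q0 n * / r2)%R).
      apply (cont2 _ _ (Rmin (r1 - Cmod p1) (r2 - Cmod p2)) (Rabs S1 + Rabs S2)).
      { apply Rmin_pos; lra. }
      { pose proof (Rabs_pos S1); pose proof (Rabs_pos S2); lra. }
      intros [q1 q2] Hq1 Hq2. simpl in *.
      assert (Hq1' : (Cmod q1 <= r1)%R).
      { eapply near_le; [|exact Hq1]. pose proof (Rmin_l (r1 - Cmod p1) (r2 - Cmod p2)). lra. }
      assert (Hq2' : (Cmod q2 <= r2)%R).
      { eapply near_le; [|exact Hq2]. pose proof (Rmin_r (r1 - Cmod p1) (r2 - Cmod p2)). lra. }
      replace (Fh phi (q1, q2) - Fh phi (p1, p2)) with
        ((Fh phi (q1, q2) - Fh phi (p1, q2)) + (Fh phi (p1, q2) - Fh phi (p1, p2))) by ring.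
      eapply Rle_trans; [apply Cmod_triangle|].
      assert (A : (Cmod (Fh phi (q1, q2) - Fh phi (p1, q2)) <= S1 * Cmod (q1 - p1))%R).
      { apply (series_diff_bound (fun n => Tm phi n q1 q2) (fun n => Tm phi n p1 q2)).
        - apply (conv phi q1 q2 r1 r2); auto.
        - apply (conv phi p1 q2 r1 r2); auto; lra.
        - apply ex_series_scal_r; auto.
        - intros n.
          destruct (good_use r1 n (r2 ^ n) (fun z => Tm phi n z q2) q0) as [f' Hf'].
          + apply good_z1; auto; lra.
          + lra.
          + rewrite Epow; lra.
          + lra.
          + destruct (Hf' p1 q1) as (_ & B & _); try lra.
            apply (Rmult_le_reg_l r1); [lra|].
            replace (r1 * (G q0 n * / r1 * Cmod (q1 - p1)))%R with (G q0 n * Cmod (q1 - p1))%R by (field; lra).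
            exact B. }
      assert (B : (Cmod (Fh phi (p1, q2) - Fh phi (p1, p2)) <= S2 * Cmod (q2 - p2))%R).
      { apply (series_diff_bound (fun n => Tm phi n p1 q2) (fun n => Tm phi n p1 p2)).
        - apply (conv phi p1 q2 r1 r2); auto; lra.
        - apply (conv phi p1 p2 r1 r2); auto; lra.
        - apply ex_series_scal_r; auto.
        - intros n.
          destruct (good_use r2 n (r1 ^ n) (fun z => Tm phi n p1 z) q0) as [f' Hf'].
          + apply good_z2; auto; lra.
          + lra.
          + rewrite Epow'; lra.
          + lra.
          + destruct (Hf' p2 q2) as (_ & B & _); try lra.
            apply (Rmult_le_reg_l r2); [lra|].
            replace (r2 * (G q0 n * / r2 * Cmod (q2 - p2)))%R with (G q0 n * Cmod (q2 - p2))%R by (field; lra).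
            exact B. }
      pose proof (Rle_abs S1). pose proof (Rle_abs S2).
      pose proof (Cmod_ge_0 (q1 - p1)). pose proof (Cmod_ge_0 (q2 - p2)).
      pose proof (Rabs_pos S1). pose proof (Rabs_pos S2).
      nra.
    +
      apply (deriv_series (fun n z => Tm phi n z p2) (fun w => Fh phi (w, p2)) p1 r1 (G q0)); auto.
      * intros y Hy. apply (conv phi y p2 r1 r2); auto; lra.
      * intros n.
        destruct (good_use r1 n (r2 ^ n) (fun z => Tm phi n z p2) q0) as [f' Hf'].
        -- apply good_z1; auto; lra.
        -- lra.
        -- rewrite Epow; lra.
        -- lra.
        -- exists (f' p1). destruct (Hf' p1 p1) as (D1 & _); try lra.
           split; auto. intros y Hy. destruct (Hf' p1 y) as (_ & _ & D3); auto; lra.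
    +
      apply (deriv_series (fun n z => Tm phi n p1 z) (fun w => Fh phi (p1, w)) p2 r2 (G q0)); auto; try lra.
      * intros y Hy. apply (conv phi p1 y r1 r2); auto; lra.
      * intros n.
        destruct (good_use r2 n (r1 ^ n) (fun z => Tm phi n p1 z) q0) as [f' Hf'].
        -- apply good_z2; auto; lra.
        -- lra.
        -- rewrite Epow'; lra.
        -- lra.
        -- exists (f' p2). destruct (Hf' p2 p2) as (D1 & _); try lra.
           split; auto. intros y Hy. destruct (Hf' p2 y) as (_ & _ & D3); auto; lra.
Qed.

Theorem proposition7p2 (phi : word) :
  exists U : C * C -> Prop,
    (forall z1 z2 : C, (Cmod z1 < 1)%R -> (Cmod z2 < 1)%R -> U (z1, z2)) /\
    U (RtoC 0, RtoC 1) /\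
    exists F : C * C -> C,
      holomorphic2_on U F /\
      (forall z1 z2 : C, (Cmod z1 < 1)%R -> (Cmod z2 < 1)%R ->
         is_hyperlog phi z1 z2 (F (z1, z2))) /\
      (exists eps : R, (0 < eps)%R /\
         forall (z1 : C) (t : R), (Cmod z1 < eps)%R -> (0 <= t <= 1)%R ->
           U (z1, RtoC t)).
Proof.
  exists Ureg. split; [|split].
  - intros z1 z2 H1 H2. apply (Ureg_in z1 z2 (Cmod z1) 1); lra.
  - unfold Ureg. simpl. rewrite Cmod_0. lra.
  - exists (Fh phi). split; [apply holo|split].
    + intros z1 z2 H1 H2. unfold is_hyperlog.
      apply (conv phi z1 z2 (Cmod z1) 1); lra.
    + exists (1/2)%R. split; [lra|]. intros z1 t H1 H2.
      apply (Ureg_in z1 t (1/2) 1); try lra.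
      rewrite Cmod_R. rewrite Rabs_right; lra.
Qed.
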